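(* Let $A \in \mathbb{C}^{m\times n}$, let $k$ be an integer with $1\le k\le\min\{m,n\}$, and let $\rho\in(0,1)$. Let $\Pi$ be the $n\times n$ column permutation matrix output by the CCEQR algorithm (described in the context) on input $(A,k,\rho)$. Then there exists a unitary $Q\in\mathbb{C}^{m\times m}$ such that $Q^*A\Pi$ has $\mathrm{GB}(k)$ form.
   Context: $\mathrm{GB}(k)$ form: a matrix $R\in\mathbb{C}^{m\times n}$ has $\mathrm{GB}(k)$ form ($0\le k\le\min\{m,n\}$) if its first $k$ columns are upper-triangular and $|R(i,i)| = \max_{i\le j\le n}\|R(i:m,j)\|_2$ for $1\le i\le k$. Householder reflection at step $i$ on $\mathbb{C}^p$: a unitary $I-\tau vv^*$, $\tau\ge0$ real, $v(1..i-1)=0$, $v(i)=1$, mapping a given $x$ to $[x(1),\dots,x(i-1),\mu',0,\dots,0]$ with $|\mu'|=\|x(i:p)\|_2$. Golub–Businger algorithm on $B\in\mathbb{C}^{p\times b}$ for $d\le\min\{p,b\}$ steps: $R\leftarrow B$; for $i=1..d$ choose $j_{\max}\in\arg\max_{j\ge i}\|R(i:p,j)\|_2$, swap columns $i,j_{\max}$ (recorded in a permutation $\widehat P$), let $H_i$ be the step-$i$ Householder reflection zeroing entries $(i+1):p$ of column $i$, set $R\leftarrow H_iR$; output $\widehat R = H_d\cdots H_1B\widehat P$. CCEQR algorithm on $(A,k,\rho)$. It maintains a permutation $\Pi$, a unitary $Q$, integers $s$ (''committed'' count) and $t$ (''tracked'' count) with $s+t\le n$, and a number $\mu$. Column positions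 $1..s$ are committed, $s+1..s+t$ tracked, $s+t+1..n$ untracked. Define $\gamma(j)=\|(Q^*A\Pi)((s+1):m,\,j)\|_2^2$ for $s<j\le s+t$ (the squared norm of the component of $A\Pi(:,j)$ orthogonal to the range of $A\Pi(:,1:s)$) and $\gamma(j)=\|A\Pi(:,j)\|_2^2$ for $j>s+t$. Initialize $Q=I_m$, $\Pi=I_n$, $s=0$, $t=n$, $\mu=0$. While $s<k$, perform a cycle: (Collect) Let $b=1+\lfloor\rho(t-1)\rfloor$. Let the candidates be $b$ indices of $\{s+1,\dots,s+t\}$ with the largest values of $\gamma$, and let $\delta$ be the largest $\gamma(j)$ over the non-candidate indices of $\{s+1,\dots,s+t\}$ ($\delta=0$ if $b=t$). In the first cycle only, then set $t\leftarrow b$ (non-candidates become untracked). Apply $d=\min\{m-s,b\}$ steps of the Golub–Businger algorithm to $B=(Q^*A\Pi)((s+1):m,\ \text{candidates})$, obtaining $\widehat P$, $H_1,\dots,H_d$, $\widehat R$. Update $\Pi$ by moving the candidate columns to positions $s+1,\dots,s+b$ in the order given by $\widehat P$, placing the other tracked columns in positions $s+b+1,\dots,s+t$ and leaving all other positions unchanged. (Commit) Let $c=\max\{i\in\{1,\dots,d\}: |\widehat R(i,i)|^2\ge\max(\delta,\mu)\}$. Set $Q\leftarrow Q\,\mathrm{diag}(I_s,\,H_1H_2\cdots H_c)$, $s\leftarrow s+c$, $t\leftarrow t-c$. If $s\ge k$, stop and output $\Pi$. (Expand) Let $M=\max_{s<j\le s+t}\gamma(j)$ (with $M=0$ if $t=0$).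 Let $U$ be the set of untracked positions $j>s+t$ with $\|A\Pi(:,j)\|_2^2\ge M$; if $U$ is empty and untracked positions exist, instead let $U$ be the untracked positions with $\|A\Pi(:,j)\|_2^2\ge 0.9$ times the largest squared norm among untracked columns. Permute these columns to positions $s+t+1,\dots,s+t+|U|$ (leaving committed and tracked positions unchanged), set $t\leftarrow t+|U|$, and set $\mu$ to the largest $\|A\Pi(:,j)\|_2^2$ over the remaining untracked positions ($\mu=0$ if none). *)

(* Defs.v *)
(* Complex scalars: an arbitrary numClosedFieldType C
   (e.g. complex numbers); conjugate transpose M^t* and unitarymx from
   mathcomp's spectral.v. *)
From HB Require Import structures.
From mathcomp Require Import all_boot all_order all_fingroup all_algebra.
From mathcomp Require Export spectral.

Set Implicit Arguments.
Unset Strict Implicit.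
Unset Printing Implicit Defensive.

Import Order.TTheory GRing.Theory Num.Theory.
Local Open Scope ring_scope.
Local Open Scope sesquilinear_scope.

Section CCEQR.
Variable C : numClosedFieldType.

Definition colsq p q (M : 'M[C]_(p, q)) (r : nat) (j : 'I_q) : C :=
  \sum_(i : 'I_p | (r <= i)%N) `|M i j| ^+ 2.

Definition colnorm p q (M : 'M[C]_(p, q)) (r : nat) (j : 'I_q) : C :=
  sqrtC (colsq M r j).

Definition is_max q (P : 'I_q -> Prop) (f : 'I_q -> C) (x : C) : Prop :=
  (exists2 j, P j & f j = x) /\ (forall j, P j -> f j <= x).

Definition is_max0 q (P : 'I_q -> Prop) (f : 'I_q -> C) (x : C) : Prop :=
  ((forall j, ~ P j) /\ x = 0) \/ is_max P f x.

(* GB(k) form, 0-based indices: first k columns upper triangular and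
   |R(i,i)| = max_{j >= i} ||R(i:m, j)||  for i < k. *)
Definition GB_form m n (k : nat) (R : 'M[C]_(m, n)) : Prop :=
  (forall (i : 'I_m) (j : 'I_n), (j < k)%N -> (j < i)%N -> R i j = 0) /\
  (forall (i : 'I_m) (i' : 'I_n), (i < k)%N -> val i = val i' ->
      is_max (fun j : 'I_n => (i <= j)%N) (colnorm R i) `|R i i'|).

Definition householder m (p : nat) (x : 'cV[C]_m) (H : 'M[C]_m) : Prop :=
  exists (tau : C) (v : 'cV[C]_m),
    [/\ tau \is Num.real /\ 0 <= tau,
        (forall j : 'I_m, (j < p)%N -> v j 0 = 0) /\
        (forall j : 'I_m, val j = p -> v j 0 = 1),
        H = 1%:M - tau *: (v *m (v ^t* )),
        H \is unitarymx &
        (exists mu' : C, `|mu'| = colnorm x p 0 /\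
          H *m x = \col_j (if (j < p)%N then x j 0
                           else if val j == p then mu' else 0))].

Fixpoint qpref m (Q : 'M[C]_m) (Hs : nat -> 'M[C]_m) (i : nat) : 'M[C]_m :=
  if i is i'.+1 then qpref Q Hs i' *m Hs i' else Q.

Variables (m n : nat) (A : 'M[C]_(m, n)) (k : nat) (rho : C).

Definition work (Q : 'M[C]_m) (P : 'S_n) : 'M[C]_(m, n) := (Q ^t* ) *m col_perm P A.

(* gamma(j): tracked positions s <= j < s+t use the part orthogonal to the
   committed columns; untracked positions use the full squared norm. *)
Definition gamma (Q : 'M[C]_m) (P : 'S_n) (s t : nat) (j : 'I_n) : C :=
  if (j < s + t)%N then colsq (work Q P) s j else colsq (col_perm P A) 0 j.

Definition collect_commit (P : 'S_n) (Q : 'M[C]_m) (s t : nat) (mu : C)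
    (first : bool) (P' : 'S_n) (Q' : 'M[C]_m) (s' t' : nat) : Prop :=
  let tracked := fun j : 'I_n => (s <= j)%N /\ (j < s + t)%N in
  let g := gamma Q P s t in
  exists (b : nat) (S : {set 'I_n}) (delta : C) (sigma : 'S_n)
         (Ps : nat -> 'S_n) (Hs : nat -> 'M[C]_m) (c : nat),
  let t1 := if first then b else t in
  let d := minn (m - s) b in
  let Rhat := work (qpref Q Hs d) (Ps d) in
  let cond := fun i : nat => forall (r : 'I_m) (q : 'I_n),
      val r = (s + i).-1 -> val q = (s + i).-1 ->
      delta <= `|Rhat r q| ^+ 2 /\ mu <= `|Rhat r q| ^+ 2 in
  [/\ (* b = 1 + floor(rho (t-1)) *)
      b%:R - 1 <= rho * (t%:R - 1) /\ rho * (t%:R - 1) < b%:R,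
      (forall j, j \in S -> tracked j) /\ #|S| = b /\
        (forall j j', j \in S -> tracked j' -> j' \notin S -> g j' <= g j),
      is_max0 (fun j => tracked j /\ j \notin S) g delta /\
      (forall j : 'I_n, ~ tracked j -> sigma j = j) /\
        (forall j : 'I_n, (s <= j)%N -> (j < s + b)%N -> sigma j \in S) /\
        Ps 0 = (sigma * P)%g,
      (forall i, (i < d)%N ->
         exists jp jmax : 'I_n,
           [/\ val jp = (s + i)%N /\ (s + i <= jmax)%N /\ (jmax < s + b)%N,
               (forall j : 'I_n, (s + i <= j)%N -> (j < s + b)%N ->
                  colsq (work (qpref Q Hs i) (Ps i)) (s + i) j
                  <= colsq (work (qpref Q Hs i) (Ps i)) (s + i) jmax),
               Ps i.+1 = (tperm jp jmax * Ps i)%g &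
               householder (s + i) (col jp (work (qpref Q Hs i) (Ps i.+1)))
                           (Hs i)]) &
      (* c = max { i in 1..d : |Rhat(i,i)|^2 >= max(delta, mu) } (0 if none) *)
      ((c <= d)%N /\ (c = 0%N \/ (1 <= c)%N /\ cond c) /\
        (forall i, (c < i)%N -> (i <= d)%N -> ~ cond i) /\
      [/\ P' = Ps d, Q' = qpref Q Hs c, s' = (s + c)%N & t' = (t1 - c)%N])].

Definition expand (P : 'S_n) (Q : 'M[C]_m) (s t : nat)
    (P' : 'S_n) (t' : nat) (mu' : C) : Prop :=
  let untr := fun j : 'I_n => (s + t <= j)%N in
  let nrm := fun j : 'I_n => colsq (col_perm P A) 0 j in
  exists (M Mu : C) (sigma : 'S_n),
  let U0 := [set j : 'I_n | (s + t <= j)%N && (M <= nrm j)] in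
  let U := if U0 != set0 then U0
           else [set j : 'I_n | (s + t <= j)%N && (9%:R / 10%:R * Mu <= nrm j)] in
  [/\ is_max0 (fun j : 'I_n => (s <= j)%N /\ (j < s + t)%N) (gamma Q P s t) M,
      is_max0 untr nrm Mu,
      (forall j : 'I_n, (j < s + t)%N -> sigma j = j) /\
        (forall j : 'I_n, (s + t <= j)%N -> (j < s + t + #|U|)%N -> sigma j \in U),
      P' = (sigma * P)%g /\
      t' = (t + #|U|)%N &
      is_max0 (fun j : 'I_n => (t' + s <= j)%N)
              (fun j => colsq (col_perm P' A) 0 j) mu'].

(* cceqr_out P Q s t mu first Pout : starting the while-loop from state
   (P, Q, s, t, mu, first), some run of CCEQR stops with output Pout. *)
Inductive cceqr_out : 'S_n -> 'M[C]_m -> nat -> nat -> C -> bool -> 'S_n -> Prop :=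
| cceqr_stop P Q s t mu f P' Q' s' t' :
    (s < k)%N -> collect_commit P Q s t mu f P' Q' s' t' -> (k <= s')%N ->
    cceqr_out P Q s t mu f P'
| cceqr_cycle P Q s t mu f P' Q' s' t' P'' t'' mu'' Pout :
    (s < k)%N -> collect_commit P Q s t mu f P' Q' s' t' -> (s' < k)%N ->
    expand P' Q' s' t' P'' t'' mu'' ->
    cceqr_out P'' Q' s' t'' mu'' false Pout ->
    cceqr_out P Q s t mu f Pout.

(* Pi (as a permutation s with A Pi = col_perm s A) is an output of CCEQR
   on (A, k, rho), from the initial state Q = I, Pi = I, s = 0, t = n, mu = 0. *)
Definition cceqr_output (P : 'S_n) : Prop :=
  cceqr_out 1%g 1%:M 0 n 0 true P.

End CCEQR.

(* Main.v *)
Require Import Defs.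
From HB Require Import structures.
From mathcomp Require Import all_boot all_order all_fingroup all_algebra spectral.
Import Order.TTheory GRing.Theory Num.Theory.
Local Open Scope ring_scope.
Local Open Scope sesquilinear_scope.
From Stdlib Require Import Classical.
Set Implicit Arguments.
Unset Strict Implicit.
Unset Printing Implicit Defensive.

Section Aux.
Variable C : numClosedFieldType.

Lemma trC_mul p q r (X : 'M[C]_(p, q)) (Y : 'M[C]_(q, r)) :
  (X *m Y)^t* = Y^t* *m X^t*.
Proof.
apply/matrixP=> i j; rewrite !mxE rmorph_sum; apply: eq_bigr => l _.
by rewrite !mxE rmorphM mulrC.
Qed.

Lemma colsq_ge0 p q (M : 'M[C]_(p, q)) r j : 0 <= colsq M r j.
Proof. by apply: sumr_ge0 => i _; rewrite exprn_ge0. Qed.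

Lemma colsq0E p q (M : 'M[C]_(p, q)) j : colsq M 0 j = (M^t* *m M) j j.
Proof.
rewrite /colsq !mxE; apply: eq_bigr => i _.
by rewrite !mxE normCKC.
Qed.

Lemma colsq_split p q (M : 'M[C]_(p, q)) r j :
  colsq M 0 j = colsq M r j + \sum_(i : 'I_p | ~~ (r <= i)%N) `|M i j| ^+ 2.
Proof. by rewrite /colsq (bigID (fun i : 'I_p => (r <= i)%N)). Qed.

Lemma colsq_mono p q (M : 'M[C]_(p, q)) r r' j :
  (r <= r')%N -> colsq M r' j <= colsq M r j.
Proof.
move=> hr; rewrite [X in _ <= X]/colsq (bigID (fun i : 'I_p => (r' <= i)%N)) /=.
have -> : \sum_(i : 'I_p | (r <= i)%N && (r' <= i)%N) `|M i j| ^+ 2 = colsq M r' j.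
  by apply: eq_bigl => i; case: (leqP r' i) => h; rewrite ?andbT ?andbF //= (leq_trans hr h).
by rewrite lerDl; apply: sumr_ge0 => i _; rewrite exprn_ge0.
Qed.

Lemma colsq_unitary p q (U : 'M[C]_p) (M : 'M[C]_(p, q)) j :
  U \is unitarymx -> colsq (U *m M) 0 j = colsq M 0 j.
Proof.
move=> /unitarymxP hU; have hU' := mulmx1C hU.
by rewrite !colsq0E trC_mul -mulmxA (mulmxA _ U) hU' mul1mx.
Qed.

Lemma colsq_eq_rows p q (M N : 'M[C]_(p, q)) r j j' :
  colsq M 0 j = colsq N 0 j' ->
  (forall i : 'I_p, (i < r)%N -> M i j = N i j') ->
  colsq M r j = colsq N r j'.
Proof.
move=> h0 hr; move: h0; rewrite (colsq_split M r) (colsq_split N r).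
have -> : \sum_(i : 'I_p | ~~ (r <= i)%N) `|M i j| ^+ 2 =
          \sum_(i : 'I_p | ~~ (r <= i)%N) `|N i j'| ^+ 2.
  by apply: eq_bigr => i; rewrite -ltnNge => /hr ->.
by move/addIr.
Qed.

Lemma colsq_col_perm p q (M : 'M[C]_(p, q)) (s : 'S_q) r j :
  colsq (col_perm s M) r j = colsq M r (s j).
Proof. by apply: eq_bigr => i _; rewrite mxE. Qed.

Lemma colsq_col p q (M : 'M[C]_(p, q)) r j :
  colsq (col j M) r 0 = colsq M r j.
Proof. by apply: eq_bigr => i _; rewrite mxE. Qed.


Definition HH m (p : nat) (H : 'M[C]_m) : Prop :=
  exists (tau : C) (v : 'cV[C]_m),
    [/\ tau \is Num.real, (forall j : 'I_m, (j < p)%N -> v j 0 = 0),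
        H = 1%:M - tau *: (v *m (v ^t* )) & H \is unitarymx].

Lemma householder_HH m p x (H : 'M[C]_m) : householder p x H -> HH p H.
Proof. by case=> tau [v [[hr _] [hv _] hH hU _]]; exists tau, v; split. Qed.

Lemma HH_adj m p (H : 'M[C]_m) : HH p H -> H^t* = H.
Proof.
case=> tau [v [hr _ -> _]].
have ct : tau^* = tau := conj_Creal hr.
apply/matrixP=> i j; rewrite !mxE !big_ord1 !mxE /=.
rewrite !(rmorphB, rmorphM) /= ct conjCK rmorph_nat eq_sym !mulrA.
by rewrite -!mulrA [_^* * _]mulrC.
Qed.

Lemma HH_mulE m q p (H : 'M[C]_m) (M : 'M[C]_(m, q)) :
  HH p H -> exists tau (v : 'cV[C]_m),
    (forall j : 'I_m, (j < p)%N -> v j 0 = 0) /\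
    forall r j, (H *m M) r j = M r j - tau * v r 0 * \sum_l (v l 0)^* * M l j.
Proof.
case=> tau [v [hr hv -> _]]; exists tau, v; split=> // r j.
rewrite mulmxBl mul1mx -scalemxAl -mulmxA !mxE big_ord1 !mxE mulrA.
congr (_ - _ * _); apply: eq_bigr => l _; rewrite !mxE //.
Qed.

Lemma HH_rows m q p (H : 'M[C]_m) (M : 'M[C]_(m, q)) (r : 'I_m) j :
  HH p H -> (r < p)%N -> (H *m M) r j = M r j.
Proof.
move=> hH hr; case: (HH_mulE M hH) => tau [v [hv ->]].
by rewrite hv // mulr0 mul0r subr0.
Qed.

Lemma HH_zero m q p (H : 'M[C]_m) (M : 'M[C]_(m, q)) (r : 'I_m) j :
  HH p H -> (forall l : 'I_m, (p <= l)%N -> M l j = 0) -> (H *m M) r j = M r j.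
Proof.
move=> hH hz; case: (HH_mulE M hH) => tau [v [hv ->]].
rewrite big1 ?mulr0 ?subr0 // => l _.
by case: (leqP p l) => h; [rewrite hz ?mulr0 | rewrite hv ?conjC0 ?mul0r].
Qed.

Lemma HH_colsq m q p (H : 'M[C]_m) (M : 'M[C]_(m, q)) r j :
  HH p H -> (r <= p)%N -> colsq (H *m M) r j = colsq M r j.
Proof.
move=> hH hr; apply: colsq_eq_rows.
  by apply: colsq_unitary; case: hH => tau [v [_ _ _ ->]].
by move=> i hi; apply: (HH_rows _ _ hH); apply: leq_trans hi hr.
Qed.

Lemma HH_unitary m p (H : 'M[C]_m) : HH p H -> H \is unitarymx.
Proof. by case=> tau [v [_ _ _ ->]]. Qed.

End Aux.

Section Main.
Variables (C : numClosedFieldType) (m n : nat) (A : 'M[C]_(m, n)).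

Lemma work_perm Q (s P : 'S_n) : work A Q (s * P)%g = col_perm s (work A Q P).
Proof.
rewrite /work col_permM; apply/matrixP=> i j; rewrite !mxE.
by apply: eq_bigr => l _; rewrite !mxE.
Qed.

Lemma work_mulH Q H P p : HH p H -> work A (Q *m H) P = H *m work A Q P.
Proof. by move=> hH; rewrite /work trC_mul (HH_adj hH) mulmxA. Qed.

Definition Inv (Q : 'M[C]_m) (P : 'S_n) (s : nat) : Prop :=
  [/\ Q \is unitarymx,
      forall (r : 'I_m) (j : 'I_n), (j < s)%N -> (j < r)%N -> work A Q P r j = 0 &
      forall (i j : 'I_n), (i < s)%N -> (i <= j)%N ->
        colsq (work A Q P) i j <= colsq (work A Q P) i i].

Lemma perm_fix_ge (tau : 'S_n) s (j : 'I_n) :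
  (forall j : 'I_n, (j < s)%N -> tau j = j) -> (s <= j)%N -> (s <= tau j)%N.
Proof.
move=> htau hj; case: (leqP s (tau j)) => // h.
have := htau _ h; move/perm_inj => e; by move: h; rewrite e ltnNge hj.
Qed.

Lemma inv_perm Q P s (tau : 'S_n) :
  Inv Q P s -> (forall j : 'I_n, (j < s)%N -> tau j = j) -> Inv Q (tau * P)%g s.
Proof.
case=> hU hb hc htau; split=> //.
- by move=> r j hj hr; rewrite work_perm mxE htau //; apply: hb.
- move=> i j hi hij; rewrite work_perm !colsq_col_perm (htau i) //.
  apply: hc => //; case: (ltnP j s) => hj; first by rewrite htau.
  by apply: leq_trans (ltnW hi) (perm_fix_ge htau hj).
Qed.

Lemma inv_house Q P s p H :
  Inv Q P s -> HH p H -> (s <= p)%N -> Inv (Q *m H) P s.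
Proof.
case=> hU hb hc hH hsp; split.
- by apply: mul_unitarymx => //; apply: HH_unitary hH.
- move=> r j hj hr; rewrite (work_mulH _ _ hH) (HH_zero _ hH) ?hb // => l hl.
  by apply: hb => //; apply: leq_trans hj (leq_trans hsp hl).
- move=> i j hi hij; have hip : (i <= p)%N by apply: leq_trans (ltnW hi) hsp.
  by rewrite (work_mulH _ _ hH) !(HH_colsq _ _ hH hip); apply: hc.
Qed.

Lemma inv_ext Q P s :
  Inv Q P s ->
  (forall (r : 'I_m) (j : 'I_n), val j = s -> (s < r)%N -> work A Q P r j = 0) ->
  (forall (i j : 'I_n), val i = s -> (s <= j)%N ->
      colsq (work A Q P) s j <= colsq (work A Q P) s i) ->
  Inv Q P s.+1.
Proof.
case=> hU hb hc hb' hc'; split=> //.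
- move=> r j; rewrite ltnS leq_eqVlt => /orP [/eqP e|hj] hr.
    by apply: hb' => //; rewrite -e.
  exact: hb.
- move=> i j; rewrite ltnS leq_eqVlt => /orP [/eqP e|hi] hij.
    by rewrite e; apply: hc' => //; rewrite -e.
  exact: hc.
Qed.

Lemma inv_GB Q P s k :
  Inv Q P s -> (k <= s)%N -> (k <= m)%N -> GB_form k (work A Q P).
Proof.
case=> hU hb hc hks hkm; split.
  by move=> i j hj hij; apply: hb => //; apply: leq_trans hj hks.
move=> i i' hi e.
have hi's : (i' < s)%N by rewrite -e; apply: leq_trans hi hks.
have hsq : colsq (work A Q P) i i' = `|work A Q P i i'| ^+ 2.
  rewrite /colsq (bigD1 i) //= big1 ?addr0 // => r /andP [hr hne].
  rewrite hb ?normr0 ?expr0n // -e ltn_neqAle hr andbT.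
  by apply: contra hne => /eqP h; apply/eqP/val_inj.
have hn : colnorm (work A Q P) i i' = `|work A Q P i i'|.
  by rewrite /colnorm hsq sqrCK.
split.
  by exists i' => //; rewrite e.
move=> j hj; rewrite -hn /colnorm ler_sqrtC ?nnegrE ?colsq_ge0 //.
by rewrite e; apply: hc => //; rewrite -e.
Qed.


Lemma perm_fix_pred (tau : 'S_n) (Pr : 'I_n -> Prop) (j : 'I_n) :
  (forall j : 'I_n, ~ Pr j -> tau j = j) -> Pr j -> Pr (tau j).
Proof.
move=> htau hj; case: (classic (Pr (tau j))) => // h.
by have := htau _ h; move/perm_inj => e; rewrite e.
Qed.

Lemma tperm_pred (Pr : 'I_n -> Prop) (x y z : 'I_n) :
  Pr x -> Pr y -> Pr z -> Pr (tperm x y z).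
Proof. by move=> hx hy hz; case: tpermP => // ->. Qed.

Lemma colsq_single (M : 'M[C]_(m, n)) (r : 'I_m) j :
  (forall r' : 'I_m, (r < r')%N -> M r' j = 0) -> colsq M r j = `|M r j| ^+ 2.
Proof.
move=> hz; rewrite /colsq (bigD1 r) //= big1 ?addr0 // => r' /andP [hr hne].
rewrite hz ?normr0 ?expr0n // ltn_neqAle hr andbT.
by apply: contra hne => /eqP h; apply/eqP/val_inj.
Qed.

Lemma gb_step Q Hs (Ps : nat -> 'S_n) i p (jp jmax : 'I_n) :
  val jp = p -> (p <= jmax)%N -> Ps i.+1 = (tperm jp jmax * Ps i)%g ->
  householder p (col jp (work A (qpref Q Hs i) (Ps i.+1))) (Hs i) ->
  [/\ forall r j, (r <= p)%N ->
        colsq (work A (qpref Q Hs i.+1) (Ps i.+1)) r j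
        = colsq (work A (qpref Q Hs i) (Ps i)) r (tperm jp jmax j),
      forall (r : 'I_m) j, (r < p)%N ->
        work A (qpref Q Hs i.+1) (Ps i.+1) r j
        = work A (qpref Q Hs i) (Ps i) r (tperm jp jmax j),
      forall r : 'I_m, (p < r)%N -> work A (qpref Q Hs i.+1) (Ps i.+1) r jp = 0 &
      forall s0, (s0 <= p)%N -> Inv (qpref Q Hs i) (Ps i) s0 ->
        Inv (qpref Q Hs i.+1) (Ps i.+1) s0].
Proof.
move=> ejp hjm ePs hh; have hH := householder_HH hh.
have eW : work A (qpref Q Hs i.+1) (Ps i.+1) =
          Hs i *m col_perm (tperm jp jmax) (work A (qpref Q Hs i) (Ps i)).
  by rewrite /= (work_mulH _ _ hH) ePs work_perm.
split.
- by move=> r j hr; rewrite eW (HH_colsq _ _ hH hr) colsq_col_perm.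
- by move=> r j hr; rewrite eW (HH_rows _ _ hH hr) mxE.
- move=> r hr; rewrite /= (work_mulH _ _ hH).
  case: hh => tau [v [_ _ _ _ [mu' [_ hx]]]].
  have -> : (Hs i *m work A (qpref Q Hs i) (Ps i.+1)) r jp
          = (Hs i *m col jp (work A (qpref Q Hs i) (Ps i.+1))) r 0.
    by rewrite !mxE; apply: eq_bigr => l _; rewrite !mxE.
  rewrite hx mxE ltnNge (ltnW hr) /=.
  by case: eqP => // e; rewrite e ltnn in hr.
- move=> s0 hs0 hI; rewrite ePs /=; apply: (inv_house _ hH) => //.
  apply: inv_perm => // j hj; rewrite tpermD //.
    by apply/eqP => e; move: hj; rewrite -e ejp ltnNge hs0.
  by apply/eqP => e; move: hj; rewrite -e ltnNge (leq_trans hs0 hjm).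
Qed.


Definition Inv_pre Q P s t mu :=
  Inv Q P s /\ forall j : 'I_n, (s + t <= j)%N -> colsq (col_perm P A) 0 j <= mu.

Lemma expand_inv Q P s t P' t' mu' :
  Inv Q P s -> expand A P Q s t P' t' mu' -> Inv_pre Q P' s t' mu'.
Proof.
move=> hI [M [Mu [sigma H]]]; move: H => /= -[hM hMu [hs1 hs2] [eP et] hmu].
split.
  rewrite eP; apply: (@inv_perm Q P s sigma hI) => j hj; apply: hs1.
  by apply: leq_trans hj (leq_addr _ _).
move=> j hj; case: hmu => [[hn _]|[_ hle]].
  by exfalso; apply: (hn j); rewrite addnC.
by apply: hle; rewrite addnC.
Qed.


Lemma commit_inv rho Q P s t mu f P' Q' s' t' :
  Inv_pre Q P s t mu -> collect_commit A rho P Q s t mu f P' Q' s' t' ->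
  Inv Q' P' s'.
Proof.
move=> [hI he] [b [S [delta [sigma [Ps [Hs [c H]]]]]]].
move: H => /= -[_ [hS1 [hS2 hS3]] [hdelta [hsig1 [hsig2 hPs0]]] hstep
  [hcd [hc1 [_ [eP eQ es _]]]]].
set d := minn (m - s) b in hstep hcd hc1.
pose Wi i := work A (qpref Q Hs i) (Ps i).
have hdm : (d <= m - s)%N by rewrite geq_minl.
have hdb : (d <= b)%N by rewrite geq_minr.
have FA : forall i, (i <= d)%N -> forall j : 'I_n, (s + b <= j)%N ->
    colsq (Wi i) s j = colsq (Wi 0%N) s j.
  elim=> [//|i IH] hi j hj.
  have [jp [jmax [[ejp [hj1 hj2]] _ ePs hh]]] := hstep i hi.
  have [G1 _ _ _] := gb_step ejp hj1 ePs hh.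
  rewrite /Wi G1 ?leq_addr // tpermD ?IH ?(ltnW hi) //.
    apply/eqP => e; move: hj; rewrite -e ejp leq_add2l leqNgt.
    by rewrite (leq_trans hi hdb).
  by apply/eqP => e; move: hj; rewrite -e leqNgt hj2.
have Wi0 : Wi 0%N = col_perm sigma (work A Q P) by rewrite /Wi /= hPs0 work_perm.
have hQ : Q^t* \is unitarymx by rewrite trmxC_unitary; case: hI.
have FB : forall j : 'I_n, (s + b <= j)%N ->
    colsq (Wi 0%N) s j <= delta \/ colsq (Wi 0%N) s j <= mu.
  move=> j hj; rewrite Wi0 colsq_col_perm.
  case: (classic ((s <= sigma j)%N /\ (sigma j < s + t)%N)) => htr.
  - left.
    have hsj : sigma j \notin S.
      apply/negP => hin.
      have hbn : (s + b <= n)%N by apply: leq_trans hj (ltnW (ltn_ord j)).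
      have hx : forall x : 'I_b, (s + x < n)%N.
        by move=> x; apply: leq_trans hbn; rewrite ltn_add2l.
      pose g (x : 'I_b) : 'I_n := Ordinal (hx x).
      have ginj : injective g.
        by move=> x y /(congr1 val) /= /addnI e; apply: val_inj.
      pose T := [set g x | x : 'I_b].
      have hsub : sigma @: T \subset S.
        apply/subsetP => y /imsetP [z /imsetP [x _ ->] ->]; apply: hsig2 => /=.
          exact: leq_addr.
        by rewrite ltn_add2l.
      have hcard : #|sigma @: T| = b.
        by rewrite card_imset; [rewrite card_imset // card_ord | exact: perm_inj].
      have eST : sigma @: T = S by apply/eqP; rewrite eqEcard hsub hcard hS2 /=.
      move: hin; rewrite -eST mem_imset; last exact: perm_inj.
      case/imsetP => x _ ej; move: hj; rewrite ej /= leq_add2l leqNgt.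
      by rewrite ltn_ord.
    case: hdelta => [[hn _]|[_ hle]]; first by exfalso; apply: (hn (sigma j)).
    by have := hle (sigma j) (conj htr hsj); rewrite /gamma; case: htr => _ ->.
  - right.
    have hjtr : ~ ((s <= j)%N /\ (j < s + t)%N).
      move=> h; apply: htr.
      exact: (perm_fix_pred (Pr := fun x : 'I_n => (s <= x)%N /\ (x < s + t)%N) hsig1 h).
    rewrite hsig1 //.
    have hjt : (s + t <= j)%N.
      case: (leqP (s + t) j) => // h; exfalso; apply: hjtr; split => //.
      by apply: leq_trans (leq_addr _ _) hj.
    apply: le_trans (he _ hjt).
    apply: le_trans (colsq_mono (work A Q P) j (leq0n s)) _.
    by rewrite /work colsq_unitary.
have FD : forall l, (c <= l)%N -> (l <= d)%N -> forall (r : 'I_m) (q : 'I_n),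
    (r < s + c)%N -> (q < s + c)%N -> Wi l r q = Wi c r q.
  elim=> [|l IH] hcl hld r q hr hq.
    by move: hcl; rewrite leqn0 => /eqP ->.
  case: (leqP c l) => hcl'; last first.
    by have -> : c = l.+1 by apply/eqP; rewrite eqn_leq hcl hcl'.
  have hl : (l < d)%N := hld.
  have [jp [jmax [[ejp [hj1 hj2]] _ ePs hh]]] := hstep l hl.
  have [_ G2 _ _] := gb_step ejp hj1 ePs hh.
  have hsc : (s + c <= s + l)%N by rewrite leq_add2l.
  rewrite /Wi G2; last by apply: leq_trans hr hsc.
  rewrite tpermD; first by apply: IH => //; apply: ltnW.
    by apply/eqP => e; move: hq; rewrite -e ejp ltnNge hsc.
  by apply/eqP => e; move: hq; rewrite -e ltnNge (leq_trans hsc hj1).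
have FC : forall i, (i < c)%N -> forall jp jmax : 'I_n,
    val jp = (s + i)%N -> (s + i <= jmax)%N -> (jmax < s + b)%N ->
    (forall j : 'I_n, (s + i <= j)%N -> (j < s + b)%N ->
       colsq (Wi i) (s + i) j <= colsq (Wi i) (s + i) jmax) ->
    Ps i.+1 = (tperm jp jmax * Ps i)%g ->
    householder (s + i) (col jp (work A (qpref Q Hs i) (Ps i.+1))) (Hs i) ->
    delta <= colsq (Wi i) (s + i) jmax /\ mu <= colsq (Wi i) (s + i) jmax.
  suff HH0 : forall e i, (i + e = c.-1)%N -> (i < c)%N -> forall jp jmax : 'I_n,
    val jp = (s + i)%N -> (s + i <= jmax)%N -> (jmax < s + b)%N ->
    (forall j : 'I_n, (s + i <= j)%N -> (j < s + b)%N ->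
       colsq (Wi i) (s + i) j <= colsq (Wi i) (s + i) jmax) ->
    Ps i.+1 = (tperm jp jmax * Ps i)%g ->
    householder (s + i) (col jp (work A (qpref Q Hs i) (Ps i.+1))) (Hs i) ->
    delta <= colsq (Wi i) (s + i) jmax /\ mu <= colsq (Wi i) (s + i) jmax.
    move=> i hi; apply: (HH0 (c.-1 - i)%N i) => //.
    by rewrite subnKC // -ltnS prednK // (leq_ltn_trans (leq0n i) hi).
  elim=> [|e IH] i hie hic jp jmax ejp hj1 hj2 hmax ePs hh.
    case: hc1 => [c0|[hc1' hcond]]; first by rewrite c0 in hic.
    have hid : (i < d)%N := leq_trans hic hcd.
    have hsm : (s + i < m)%N.
      by have := leq_trans hid hdm; rewrite ltn_subRL.
    pose r := Ordinal hsm.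
    have ec : c = i.+1.
      move: hie; rewrite addn0 => hie.
      by rewrite hie prednK // (leq_ltn_trans (leq0n i) hic).
    have [G1 _ G3 _] := gb_step ejp hj1 ePs hh.
    have hrc : (r < s + c)%N by rewrite ec addnS ltnS /=.
    have hqc : (jp < s + c)%N by rewrite ejp ec addnS ltnS.
    have eR := FD d hcd (leqnn d) r jp hrc hqc.
    have := hcond r jp; rewrite /= ec addnS /= => /(_ erefl ejp).
    rewrite [work _ _ _ _ _]eR ec.
    have -> : `|Wi i.+1 r jp| ^+ 2 = colsq (Wi i) (s + i) jmax.
      by rewrite -colsq_single /Wi ?G1 ?tpermL // => r'; apply: G3.
    done.
  have hi1c : (i.+1 < c)%N.
    move: hie; rewrite addnS => hie.
    have h0 : (0 < c)%N by apply: leq_ltn_trans hic.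
    by rewrite -(prednK h0) ltnS -hie leq_addr.
  have hi1d : (i.+1 < d)%N := leq_trans hi1c hcd.
  have [jp' [jmax' [[ejp' [hj1' hj2']] hmax' ePs' hh']]] := hstep i.+1 hi1d.
  have hie' : (i.+1 + e = c.-1)%N by rewrite addSnnS.
  have [h1 h2] := IH i.+1 hie' hi1c jp' jmax' ejp' hj1' hj2' hmax' ePs' hh'.
  have [G1 _ _ _] := gb_step ejp hj1 ePs hh.
  have key : colsq (Wi i.+1) (s + i.+1) jmax' <= colsq (Wi i) (s + i) jmax.
    apply: le_trans (colsq_mono (Wi i.+1) jmax' (_ : (s + i <= s + i.+1)%N)) _.
      by rewrite leq_add2l.
    rewrite /Wi G1 //; apply: hmax.
      apply: (tperm_pred (Pr := fun x : 'I_n => (s + i <= x)%N)) => //.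
        by rewrite ejp.
      by apply: leq_trans hj1'; rewrite leq_add2l.
    apply: (tperm_pred (Pr := fun x : 'I_n => (x < s + b)%N)) => //.
    by rewrite ejp; apply: leq_ltn_trans hj1 hj2.
  by split; apply: le_trans key.
have S3 : forall i, (i <= c)%N -> Inv (qpref Q Hs i) (Ps i) (s + i).
  elim=> [|i IH] hi.
    rewrite addn0 /= hPs0; apply: (@inv_perm Q P s sigma hI) => j hj.
    by apply: hsig1; case; rewrite leqNgt hj.
  have hic : (i < c)%N := hi.
  have hid : (i < d)%N := leq_trans hic hcd.
  have [jp [jmax [[ejp [hj1 hj2]] hmax ePs hh]]] := hstep i hid.
  have [G1 G2 G3 G4] := gb_step ejp hj1 ePs hh.
  have hI1 := G4 (s + i)%N (leqnn _) (IH (ltnW hi)).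
  rewrite addnS; apply: (@inv_ext (qpref Q Hs i.+1) (Ps i.+1) (s + i) hI1).
    move=> r j ej hr; have -> : j = jp by apply: val_inj; rewrite ej -ejp.
    exact: G3.
  move=> i0 j ei0 hj; have -> : i0 = jp by apply: val_inj; rewrite ei0 -ejp.
  rewrite !G1 // tpermL.
  have hj' : (s + i <= tperm jp jmax j)%N.
    by apply: (tperm_pred (Pr := fun x : 'I_n => (s + i <= x)%N)) => //; rewrite ejp.
  case: (ltnP (tperm jp jmax j) (s + b)) => hjb; first exact: hmax.
  have [h1 h2] := FC i hic jp jmax ejp hj1 hj2 hmax ePs hh.
  apply: le_trans (colsq_mono (Wi i) _ (leq_addr i s)) _.
  rewrite (FA i (ltnW hid) _ hjb).
  by case: (FB _ hjb) => h; apply: le_trans h _.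
have S4 : forall l, (c <= l)%N -> (l <= d)%N -> Inv (qpref Q Hs c) (Ps l) (s + c).
  elim=> [|l IH] hcl hld.
    have c0 : c = 0%N by apply/eqP; rewrite -leqn0.
    by move: (S3 c (leqnn c)); rewrite c0.
  case: (leqP c l) => hcl'; last first.
    have e : l.+1 = c by apply/eqP; rewrite eqn_leq hcl' hcl.
    by rewrite e; apply: S3.
  have [jp [jmax [[ejp [hj1 hj2]] _ ePs hh]]] := hstep l hld.
  rewrite ePs; apply: (@inv_perm _ _ _ (tperm jp jmax) (IH hcl' (ltnW hld))) => j hj.
  have hsc : (s + c <= s + l)%N by rewrite leq_add2l.
  rewrite tpermD //.
    by apply/eqP => e; move: hj; rewrite -e ejp ltnNge hsc.
  by apply/eqP => e; move: hj; rewrite -e ltnNge (leq_trans hsc hj1).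
by rewrite eP eQ es; apply: S4.
Qed.


Lemma out_inv k rho P Q s t mu f Pout :
  cceqr_out A k rho P Q s t mu f Pout -> Inv_pre Q P s t mu ->
  exists Q' s', Inv Q' Pout s' /\ (k <= s')%N.
Proof.
elim=> {P Q s t mu f Pout}.
  move=> P Q s t mu f P' Q' s' t' _ hcc hks hpre.
  by exists Q', s'; split => //; apply: commit_inv hpre hcc.
move=> P Q s t mu f P' Q' s' t' P'' t'' mu'' Pout _ hcc _ hexp _ IH hpre.
by apply: IH; apply: expand_inv (commit_inv hpre hcc) hexp.
Qed.

Lemma inv_init : Inv_pre 1%:M 1%g 0 n 0.
Proof.
split; last by move=> j; rewrite add0n leqNgt ltn_ord.
split => //.
apply/unitarymxP; rewrite mul1mx; apply/matrixP => i j; rewrite !mxE /=.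
by rewrite eq_sym; case: eqP => _; rewrite ?conjC1 ?conjC0.
Qed.

End Main.

Unset Implicit Arguments.
Set Strict Implicit.

Theorem theorem3p2 (C : numClosedFieldType) (m n : nat) (A : 'M[C]_(m, n))
    (k : nat) (rho : C) :
  (1 <= k)%N -> (k <= minn m n)%N -> 0 < rho -> rho < 1 ->
  forall P : 'S_n, cceqr_output A k rho P ->
  exists Q : 'M[C]_m, Q \is unitarymx /\ GB_form k ((Q ^t* ) *m col_perm P A).
Proof.
move=> hk1 hkmn hr0 hr1 P hout.
have [Q' [s' [hI hks]]] := out_inv hout (inv_init A).
exists Q'; split; first by case: hI.
exact: (inv_GB hI hks (leq_trans hkmn (geq_minl m n))).
Qed.
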